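(* For all $\boldsymbol\xi,\boldsymbol\xi'\in P_{II}$: $\mathcal D_{\boldsymbol\xi\text{-unc}}\cup\mathcal D_{\boldsymbol\xi'\text{-unc}}=\mathcal D_{(\boldsymbol\xi\cup\boldsymbol\xi')\text{-unc}}$ and $\mathcal D_{\boldsymbol\xi\text{-unc}}\cap\mathcal D_{\boldsymbol\xi'\text{-unc}}=\mathcal D_{(\boldsymbol\xi\cap\boldsymbol\xi')\text{-unc}}$ (here $\boldsymbol\xi\cup\boldsymbol\xi'$ and $\boldsymbol\xi\cap\boldsymbol\xi'$ are the join and meet in $P_{II}$).
   Context: Let $n\ge1$, $L=\{1,\dots,n\}$, and for $i\in L$ let $\mathcal H_i$ be a Hilbert space with $1<\dim\mathcal H_i<\infty$; $\mathcal H_X=\bigotimes_{i\in X}\mathcal H_i$ and $\mathcal D_X$ is the set of density operators on $\mathcal H_X$. $P_I$ is the set of partitions of $L$ ordered by refinement. For $\xi\in P_I$, $\mathcal D_{\xi\text{-unc}}=\{\varrho\in\mathcal D_L:\varrho=\bigotimes_{X\in\xi}\varrho_X,\ \varrho_X\in\mathcal D_X\}$. $P_{II}$ is the set of nonempty down-sets of $(P_I,\preceq)$, ordered by inclusion (a lattice with meet $\cap$ and join $\cup$), and for $\boldsymbol\xi\in P_{II}$, $\mathcal D_{\boldsymbol\xi\text{-unc}}=\bigcup_{\xi\in\boldsymbol\xi}\mathcal D_{\xi\text{-unc}}$. *)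

(* Defs.v *)
From HB Require Import structures.
From mathcomp Require Import all_boot all_order all_algebra all_field.
Set Implicit Arguments. Unset Strict Implicit. Unset Printing Implicit Defensive.
Import Order.TTheory GRing.Theory Num.Theory.
Local Open Scope ring_scope.

(* Sites: L = 'I_n (i.e. {0,...,n-1}, the paper's {1,...,n}); the local
   Hilbert space H_i is C^(d i) with computational basis 'I_(d i). *)

(* H_X for X a subset of L: tensor product over all i of K_i, where
   K_i = H_i if i \in X and K_i = C (one-dimensional) otherwise.
   Basis of H_X: configurations on X. *)
Definition dimX (n : nat) (d : 'I_n -> nat) (X : {set 'I_n}) (i : 'I_n) : nat :=
  if i \in X then d i else 1%N.

Definition cfgX (n : nat) (d : 'I_n -> nat) (X : {set 'I_n}) : finType :=
  {dffun forall i : 'I_n, 'I_(dimX d X i)}.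

Definition cfgL (n : nat) (d : 'I_n -> nat) : finType :=
  {dffun forall i : 'I_n, 'I_(d i)}.

Definition opX (n : nat) (d : 'I_n -> nat) (X : {set 'I_n}) :=
  cfgX d X -> cfgX d X -> algC.

Definition opL (n : nat) (d : 'I_n -> nat) := cfgL d -> cfgL d -> algC.

Definition is_density (T : finType) (rho : T -> T -> algC) : Prop :=
  (forall v : T -> algC,
      0 <= \sum_(s : T) \sum_(t : T) (v s)^* * rho s t * v t) /\
  \sum_(s : T) rho s s = 1.

(* restriction of a basis configuration of H_L to X
   (the canonical isomorphism H_L = H_X (x) H_{L\X} on basis vectors) *)
Definition resX (n : nat) (d : 'I_n -> nat) (X : {set 'I_n}) (s : cfgL d)
  : cfgX d X :=
  @finfun 'I_n (fun i => 'I_(dimX d X i))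
    (fun i => match i \in X as b return 'I_(if b then d i else 1%N) with
              | true => s i
              | false => ord0
              end).

Definition is_partition (n : nat) (xi : {set {set 'I_n}}) : Prop :=
  partition xi [set: 'I_n].

Definition refines (n : nat) (xi eta : {set {set 'I_n}}) : Prop :=
  forall X, X \in xi -> exists2 Y, Y \in eta & X \subset Y.

(* D_{xi-unc}: rho in D_L with rho = (x)_{X in xi} rho_X, rho_X in D_X *)
Definition xi_unc (n : nat) (d : 'I_n -> nat) (xi : {set {set 'I_n}})
  (rho : opL d) : Prop :=
  is_density rho /\
  exists f : forall X : {set 'I_n}, opX d X,
    (forall X, X \in xi -> is_density (f X)) /\
    (forall s t : cfgL d, rho s t = \prod_(X in xi) f X (resX X s) (resX X t)).

Definition is_PII (n : nat) (Xi : {set {set {set 'I_n}}}) : Prop :=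
  (forall xi, xi \in Xi -> is_partition xi) /\
  Xi != set0 /\
  (forall xi eta, eta \in Xi -> is_partition xi -> refines xi eta -> xi \in Xi).

Definition Xi_unc (n : nat) (d : 'I_n -> nat) (Xi : {set {set {set 'I_n}}})
  (rho : opL d) : Prop :=
  exists2 xi, xi \in Xi & xi_unc xi rho.

(* Main.v *)
Require Import Defs.
From HB Require Import structures.
From mathcomp Require Import all_boot all_order all_algebra all_field.
Set Implicit Arguments. Unset Strict Implicit. Unset Printing Implicit Defensive.
Import Order.TTheory GRing.Theory Num.Theory.
Local Open Scope ring_scope.

Definition glue (n : nat) (d : 'I_n -> nat) (S : {set 'I_n}) (s c : cfgL d) : cfgL d :=
  [ffun i => if i \in S then s i else c i].

Definition offw (n : nat) (d : 'I_n -> nat) (w : cfgL d) (S : {set 'I_n}) (s : cfgL d) : bool :=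
  [forall i, (i \notin S) ==> (s i == w i)].

Definition ext (n : nat) (d : 'I_n -> nat) (w : cfgL d) (X : {set 'I_n}) (a : cfgX d X) : cfgL d :=
  [ffun i => if i \in X then insubd (w i) (val (a i)) else w i].

Lemma glueE n (d : 'I_n -> nat) (S : {set 'I_n}) (s c : cfgL d) i : glue S s c i = if i \in S then s i else c i.
Proof. by rewrite ffunE. Qed.

Lemma val_resX n (d : 'I_n -> nat) (X : {set 'I_n}) (s : cfgL d) i :
  nat_of_ord (resX X s i) = if i \in X then val (s i) else 0%N.
Proof. rewrite /resX ffunE /dimX /=. by case: (i \in X). Qed.

Lemma resX_eq n (d : 'I_n -> nat) (X : {set 'I_n}) (s s' : cfgL d) :
  (forall i, i \in X -> s i = s' i) -> resX X s = resX X s'.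
Proof.
move=> H; apply/ffunP => i; rewrite /resX !ffunE /dimX /=.
by move: (H i); case: (i \in X) => // ->.
Qed.

Lemma cfgX_eq n (d : 'I_n -> nat) (X : {set 'I_n}) (a b : cfgX d X) :
  (forall i, i \in X -> nat_of_ord (a i) = nat_of_ord (b i)) -> a = b.
Proof.
move=> H; apply/ffunP => i; apply: val_inj.
case: (boolP (i \in X)) => [/H //|Hi].
have E : dimX d X i = 1%N by rewrite /dimX (negbTE Hi).
have Ha : (nat_of_ord (a i) < 1)%N by apply: leq_trans (ltn_ord (a i)) _; rewrite E.
have Hb : (nat_of_ord (b i) < 1)%N by apply: leq_trans (ltn_ord (b i)) _; rewrite E.
change (nat_of_ord (a i) = nat_of_ord (b i)).
by move: Ha Hb; rewrite !ltnS !leqn0 => /eqP -> /eqP ->.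
Qed.

Lemma res_ext n (d : 'I_n -> nat) (w : cfgL d) (X : {set 'I_n}) (a : cfgX d X) : resX X (ext w a) = a.
Proof.
apply: cfgX_eq => i Hi; rewrite val_resX Hi ffunE Hi.
have H : (nat_of_ord (a i) < d i)%N by apply: leq_trans (ltn_ord (a i)) _; rewrite /dimX Hi.
by rewrite val_insubd H.
Qed.

Lemma ext_res n (d : 'I_n -> nat) (w : cfgL d) (X : {set 'I_n}) (s : cfgL d) :
  offw w X s -> ext w (resX X s) = s.
Proof.
move=> /forallP H; apply/ffunP => i; rewrite ffunE.
case: (boolP (i \in X)) => Hi.
  apply: val_inj; rewrite /= val_insubd.
  have := val_resX X s i; rewrite Hi /= => ->; by rewrite ltn_ord.
by move: (H i); rewrite Hi /= => /eqP ->.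
Qed.

Lemma ext_off n (d : 'I_n -> nat) (w : cfgL d) (X : {set 'I_n}) (a : cfgX d X) : offw w X (ext w a).
Proof. apply/forallP => i. rewrite ffunE. case: (i \in X) => //=. Qed.

Lemma sum_ext n (d : 'I_n -> nat) (w : cfgL d) (X : {set 'I_n}) (F : cfgL d -> algC) :
  \sum_(s | offw w X s) F s = \sum_(a : cfgX d X) F (ext w a).
Proof.
rewrite (reindex_onto (@ext n d w X) (resX X)) /=; last by move=> s /ext_res.
apply: eq_bigl => a; rewrite ext_off res_ext eqxx //.
Qed.

Lemma glue_glue n (d : 'I_n -> nat) (Z : {set 'I_n}) (a b w : cfgL d) :
  glue Z (glue Z a b) w = glue Z a w.
Proof. apply/ffunP => i; rewrite !glueE; by case: (i \in Z). Qed.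

Lemma glue_disj n (d : 'I_n -> nat) (Z Z0 : {set 'I_n}) (a b w : cfgL d) :
  [disjoint Z0 & Z] -> glue Z (glue Z0 a b) w = glue Z b w.
Proof.
move=> D; apply/ffunP => i; rewrite !glueE.
case: (boolP (i \in Z)) => // Hi; by rewrite (disjointFl D Hi).
Qed.

Lemma offwP n (d : 'I_n -> nat) (w : cfgL d) (S : {set 'I_n}) (s : cfgL d) :
  offw w S s -> forall i, i \notin S -> s i = w i.
Proof. by move=> /forallP H i Hi; move: (H i); rewrite Hi => /eqP. Qed.

Lemma fubini n (d : 'I_n -> nat) (w : cfgL d) (Zs : seq {set 'I_n})
  (phi : {set 'I_n} -> cfgL d -> algC) :
  uniq Zs -> (forall Z Z', Z \in Zs -> Z' \in Zs -> Z != Z' -> [disjoint Z & Z']) ->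
  (forall Z s, Z \in Zs -> phi Z (glue Z s w) = phi Z s) ->
  \sum_(s | offw w (\bigcup_(Z <- Zs) Z) s) \prod_(Z <- Zs) phi Z s =
  \prod_(Z <- Zs) \sum_(s | offw w Z s) phi Z s.
Proof.
elim: Zs => [|Z0 Zs IH] /= Hu Hd Hphi.
  rewrite big_nil (big_pred1 w) ?big_nil // => s /=.
  apply/idP/idP => [H|/eqP ->].
    by apply/eqP/ffunP => i; apply: (offwP H); rewrite inE.
  by apply/forallP => i; rewrite eqxx implybT.
move: Hu => /andP [nZ0 Hu].
set U := \bigcup_(Z <- Zs) Z.
have DU : [disjoint Z0 & U].
  rewrite -setI_eq0; apply/eqP/setP => i; rewrite !inE.
  apply/negP => /andP [H1]; rewrite /U bigcup_seq => /bigcupP [Z HZ H2].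
  have := Hd Z0 Z; rewrite inE eqxx inE HZ orbT => /(_ isT isT).
  have -> : Z0 != Z by apply/eqP => E; move: nZ0; rewrite E HZ.
  by move=> /(_ isT) D; rewrite (disjointFr D H1) in H2.
rewrite big_cons big_cons -IH; first last.
- by move=> Z s HZ; apply: Hphi; rewrite inE HZ orbT.
- by move=> Z Z' HZ HZ'; apply: Hd; rewrite inE ?HZ ?HZ' orbT.
- by [].
rewrite big_distrlr pair_big_dep /=.
rewrite (reindex_onto (fun p : cfgL d * cfgL d => glue Z0 p.1 p.2)
                      (fun s => (glue Z0 s w, glue Z0 w s))) /=; last first.
  by move=> s _; apply/ffunP => i; rewrite !glueE; case: (i \in Z0).
apply: eq_big => [[a b]|[a b] /andP [Ha Hb]] /=.
  apply/idP/idP.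
  - move=> /andP [Hs /eqP E]; case: E => Ea Eb.
    apply/andP; split; [rewrite -Ea | rewrite -Eb]; apply/forallP => i; rewrite !glueE.
      by case: (i \in Z0) => //=; rewrite eqxx.
    case: (boolP (i \in Z0)) => /= HZ; first by rewrite eqxx implybT.
    apply/implyP => Hi.
    have := @offwP _ _ _ _ _ Hs i; rewrite glueE (negbTE HZ) => -> //.
    by rewrite !inE negb_or HZ Hi.
  - move=> /andP [Ha Hb]; apply/andP; split.
      apply/forallP => i; apply/implyP; rewrite !inE negb_or => /andP [H1 H2].
      by rewrite glueE (negbTE H1) (offwP Hb).
    apply/eqP; congr pair; apply/ffunP => i; rewrite !glueE.
      by case: (boolP (i \in Z0)) => // Hi; rewrite (offwP Ha).
    case: (boolP (i \in Z0)) => // Hi.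
    by rewrite (offwP Hb) // (disjointFr DU Hi).
rewrite big_cons -[phi Z0 (glue Z0 a b)]Hphi ?inE ?eqxx // glue_glue (Hphi Z0 a) ?inE ?eqxx //.
congr (_ * _); apply: eq_big_seq => Z HZ.
rewrite -Hphi ?inE ?HZ ?orbT // glue_disj ?Hphi ?inE ?HZ ?orbT //.
apply: Hd; rewrite ?inE ?eqxx ?HZ ?orbT //.
by apply/eqP => E; move: nZ0; rewrite E HZ.
Qed.

Lemma resX_glue_in n (d : 'I_n -> nat) (X : {set 'I_n}) (s w : cfgL d) :
  resX X (glue X s w) = resX X s.
Proof. by apply: resX_eq => i Hi; rewrite glueE Hi. Qed.

Lemma resX_glue_out n (d : 'I_n -> nat) (X X' : {set 'I_n}) (s w : cfgL d) :
  [disjoint X & X'] -> resX X' (glue X s w) = resX X' w.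
Proof. by move=> D; apply: resX_eq => i Hi; rewrite glueE (disjointFl D Hi). Qed.

Lemma lemA n (d : 'I_n -> nat) (xi : {set {set 'I_n}}) (f : forall X : {set 'I_n}, opX d X)
  (rho : opL d) (w : cfgL d) :
  trivIset xi ->
  (forall s t, rho s t = \prod_(X in xi) f X (resX X s) (resX X t)) ->
  forall s t, rho s t * rho w w ^+ #|xi| =
              rho w w * \prod_(X in xi) rho (glue X s w) (glue X t w).
Proof.
move=> /trivIsetP Ht Hr s t.
set a := fun X => f X (resX X s) (resX X t).
set c := fun X => f X (resX X w) (resX X w).
have E : forall X, X \in xi -> rho (glue X s w) (glue X t w) =
     \prod_(X' in xi) (if X' == X then a X' else c X').
  move=> X HX; rewrite Hr; apply: eq_bigr => X' HX'.
  case: eqP => [->|/eqP ne]; first by rewrite /a !resX_glue_in.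
  by rewrite /c !resX_glue_out // Ht // eq_sym.
rewrite (eq_bigr _ E) exchange_big /= !Hr.
rewrite -/(\prod_(X in xi) c X) -prodrXl -!big_split /=.
apply: eq_bigr => X' HX'.
rewrite (bigD1 X') //= eqxx mulrCA; congr (_ * _).
rewrite (eq_bigr (fun _ => c X')); last by move=> X /andP [_ /negPf]; rewrite eq_sym => ->.
have -> : \prod_(i in xi | i != X') c X' = c X' ^+ #|[predD1 xi & X']|.
  by rewrite -prodr_const; apply: eq_bigl => X; rewrite !inE andbC.
by rewrite -exprS (cardD1 X' xi) HX'.
Qed.

Definition meetP n (xi xi' : {set {set 'I_n}}) : {set {set 'I_n}} :=
  [set p.1 :&: p.2 | p in [set p in setX xi xi' | p.1 :&: p.2 != set0]].

Lemma tI_eq n (P : {set {set 'I_n}}) A B i :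
  trivIset P -> A \in P -> B \in P -> i \in A -> i \in B -> A = B.
Proof.
move=> /trivIsetP H HA HB Hi Hi'; apply/eqP; apply/negP => /negP ne.
by move: (disjointFr (H A B HA HB ne) Hi); rewrite Hi'.
Qed.

Lemma meetP_inj n (xi xi' : {set {set 'I_n}}) :
  trivIset xi -> trivIset xi' ->
  {in [set p in setX xi xi' | p.1 :&: p.2 != set0] &, injective (fun p : {set 'I_n} * {set 'I_n} => p.1 :&: p.2)}.
Proof.
move=> T T' [X Y] [X' Y']; rewrite !inE /= => /andP [/andP [HX HY] ne] /andP [/andP [HX' HY'] _] E.
case/set0Pn: ne => i Hi; have Hi' := Hi; rewrite E in Hi'.
move: Hi Hi'; rewrite !inE => /andP [h1 h2] /andP [h3 h4].
by rewrite (tI_eq T HX HX' h1 h3) (tI_eq T' HY HY' h2 h4).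
Qed.

Lemma glue_I n (d : 'I_n -> nat) (X Y : {set 'I_n}) (s w : cfgL d) :
  glue Y (glue X s w) w = glue (X :&: Y) s w.
Proof. apply/ffunP => i; rewrite !glueE !inE; by case: (i \in X); case: (i \in Y). Qed.

Lemma glue0 n (d : 'I_n -> nat) (s w : cfgL d) : glue set0 s w = w.
Proof. by apply/ffunP => i; rewrite glueE inE. Qed.

Lemma kappa n (d : 'I_n -> nat) (xi xi' : {set {set 'I_n}})
  (f g : forall X : {set 'I_n}, opX d X) (rho : opL d) (w : cfgL d) :
  trivIset xi -> trivIset xi' ->
  (forall s t, rho s t = \prod_(X in xi) f X (resX X s) (resX X t)) ->
  (forall s t, rho s t = \prod_(X in xi') g X (resX X s) (resX X t)) ->
  rho w w != 0 ->
  exists k, forall s t, rho s t =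
     k * \prod_(Z in meetP xi xi') rho (glue Z s w) (glue Z t w).
Proof.
move=> T T' Hf Hg HC.
set C := rho w w.
set E := \prod_(p | ((p.1 \in xi) && (p.2 \in xi')) && ~~ (p.1 :&: p.2 != set0)) C.
set K1 := C ^+ #|xi| * (C ^+ #|xi'|) ^+ #|xi|.
have HK1 : K1 != 0 by rewrite /K1 mulf_neq0 ?expf_neq0.
exists ((C * C ^+ #|xi| * E) / K1) => s t.
apply: (mulIf HK1); rewrite mulrAC divfK //.
rewrite /K1 mulrA (lemA w T Hf s t) -(prodr_const (mem xi) (C ^+ #|xi'|)) -[LHS]mulrA -big_split /=.
under eq_bigr => X HX.
  rewrite (lemA w T' Hg (glue X s w) (glue X t w)).
  under eq_bigr => Y HY do rewrite !glue_I.
  over.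
rewrite big_split /= prodr_const -!mulrA; congr (_ * (_ * _)).
rewrite pair_big_dep /= (bigID (fun p : {set 'I_n} * {set 'I_n} => p.1 :&: p.2 != set0)) /=.
rewrite mulrC; congr (_ * _).
  by apply: eq_bigr => p /andP [_]; rewrite negbK => /eqP ->; rewrite !glue0.
rewrite big_imset /=; last exact: meetP_inj.
by apply: eq_bigl => p; rewrite !inE.
Qed.

Lemma meetP_partition n (xi xi' : {set {set 'I_n}}) :
  is_partition xi -> is_partition xi' -> is_partition (meetP xi xi').
Proof.
move=> Hp Hp'; have Hc := cover_partition Hp; have Hc' := cover_partition Hp'.
move: Hp Hp' => /and3P [_ T _] /and3P [_ T' _].
apply/and3P; split.
- apply/eqP/setP => i; rewrite inE.
  have : i \in cover xi by rewrite Hc inE.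
  have : i \in cover xi' by rewrite Hc' inE.
  move=> /bigcupP [Y HY HiY] /bigcupP [X HX HiX].
  apply/bigcupP; exists (X :&: Y); last by rewrite inE HiX HiY.
  apply/imsetP; exists (X, Y) => //; rewrite !inE /= HX HY /=.
  by apply/set0Pn; exists i; rewrite inE HiX HiY.
- apply/trivIsetP => Z1 Z2 /imsetP [[X1 Y1] H1 ->] /imsetP [[X2 Y2] H2 ->] ne.
  move: H1 H2; rewrite !inE /= => /andP [/andP [HX1 HY1] _] /andP [/andP [HX2 HY2] _].
  rewrite -setI_eq0; apply/eqP/setP => i; rewrite !inE; apply/negP.
  move=> /andP [/andP [a1 b1] /andP [a2 b2]].
  by move: ne; rewrite (tI_eq T HX1 HX2 a1 a2) (tI_eq T' HY1 HY2 b1 b2) eqxx.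
- apply/imsetP => [[[X Y]]]; rewrite !inE /= => /andP [_ ne] E.
  by move: ne; rewrite -E eqxx.
Qed.

Lemma meetP_refl n (xi xi' : {set {set 'I_n}}) : refines (meetP xi xi') xi.
Proof.
move=> Z /imsetP [[X Y] H ->]; move: H; rewrite !inE /= => /andP [/andP [HX _] _].
by exists X => //; apply: subsetIl.
Qed.

Lemma meetP_refr n (xi xi' : {set {set 'I_n}}) : refines (meetP xi xi') xi'.
Proof.
move=> Z /imsetP [[X Y] H ->]; move: H; rewrite !inE /= => /andP [/andP [_ HY] _].
by exists Y => //; apply: subsetIr.
Qed.

Lemma diag_ge0 (T : finType) (rho : T -> T -> algC) : is_density rho -> forall s, 0 <= rho s s.
Proof.
move=> [H _] s; have := H (fun x => (x == s)%:R).
have E1 : forall a, a != s -> \sum_b ((a == s)%:R)^* * rho a b * (b == s)%:R = 0 :> algC.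
  by move=> a /negPf Ha; apply: big1 => b _; rewrite Ha conjC0 !mul0r.
have E2 : \sum_b ((s == s)%:R)^* * rho s b * (b == s)%:R = rho s s.
  rewrite (bigD1 s) //= big1 ?addr0; first by rewrite eqxx conjC1 mul1r mulr1.
  by move=> b /negPf ->; rewrite mulr0.
have E3 : \sum_a \sum_b ((a == s)%:R)^* * rho a b * (b == s)%:R = rho s s.
  rewrite (bigD1 s) //= E2 big1 ?addr0 // => a /E1.
by rewrite E3.
Qed.

Lemma exists_w (T : finType) (rho : T -> T -> algC) : is_density rho -> exists w, rho w w != 0.
Proof.
move=> [_ H]; case: (pickP (fun s => rho s s != 0)) => [w Hw|Hn]; first by exists w.
move: H; rewrite big1 => [/eqP|s _]; first by rewrite eq_sym oner_eq0.
by move: (Hn s) => /= /negbFE /eqP.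
Qed.

Lemma sum_off n (d : 'I_n -> nat) (w : cfgL d) (X : {set 'I_n}) (G : cfgL d -> algC) :
  (forall s, ~~ offw w X s -> G s = 0) -> \sum_s G s = \sum_(a : cfgX d X) G (ext w a).
Proof.
move=> H; rewrite (bigID (offw w X)) /= [X in _ + X]big1 ?addr0; last by move=> s /H.
exact: sum_ext.
Qed.

Lemma glue_ext n (d : 'I_n -> nat) (w : cfgL d) (X : {set 'I_n}) (a : cfgX d X) :
  glue X (ext w a) w = ext w a.
Proof. apply/ffunP => i; rewrite glueE !ffunE; by case: (i \in X). Qed.

Lemma glue_ext_res n (d : 'I_n -> nat) (w : cfgL d) (X : {set 'I_n}) (s : cfgL d) :
  glue X (ext w (resX X s)) w = glue X s w.
Proof.
apply/ffunP => i; rewrite !glueE ffunE; case: (boolP (i \in X)) => // Hi.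
apply: val_inj; rewrite /= val_insubd.
have := val_resX X s i; rewrite Hi /= => ->; by rewrite ltn_ord.
Qed.

Lemma meet_unc n (d : 'I_n -> nat) (xi xi' : {set {set 'I_n}}) (rho : opL d) :
  is_partition xi -> is_partition xi' -> xi_unc xi rho -> xi_unc xi' rho ->
  xi_unc (meetP xi xi') rho.
Proof.
move=> Hp Hp' [Hd [f [_ Hf]]] [_ [g [_ Hg]]].
split => //.
have Hpz := meetP_partition Hp Hp'.
have Hcz := cover_partition Hpz.
move: Hp Hp' Hpz => /and3P [_ T _] /and3P [_ T' _] /and3P [_ Tz _].
have [w Hw] := exists_w Hd.
have [k Hk] := kappa T T' Hf Hg Hw.
set zeta := meetP xi xi' in Hk Hcz Tz *.
set R := fun Z s t => rho (glue Z s w) (glue Z t w).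
set tau := fun Z => \sum_(a : cfgX d Z) R Z (ext w a) (ext w a).
have Htau : forall Z, 0 < tau Z.
  move=> Z; rewrite /tau -(sum_ext w Z (fun s => R Z s s)) (bigD1 w) /=.
    apply: ltr_wpDr; first by apply: sumr_ge0 => s _; exact: (diag_ge0 Hd).
    rewrite /R (_ : glue Z w w = w); last by apply/ffunP => i; rewrite glueE; case: (i \in Z).
    by rewrite lt0r Hw diag_ge0.
  by apply/forallP => i /=; rewrite eqxx implybT.
have Htau0 : forall Z, tau Z != 0 by move=> Z; rewrite gt_eqF ?Htau.
have HP : \prod_(Z in zeta) tau Z != 0 by apply/prodf_neq0 => Z _.
have Hkt : k * \prod_(Z in zeta) tau Z = 1.
  have := proj2 Hd; rewrite (eq_bigr _ (fun s _ => Hk s s)) -big_distrr /= => E1.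
  rewrite -[RHS]E1; congr (_ * _).
  rewrite -[\prod_(Z in zeta) tau Z]big_enum /=.
  under [RHS]eq_bigr => s _ do rewrite -big_enum /=.
  have := @fubini n d w (enum zeta) (fun Z s => R Z s s).
  rewrite enum_uniq => /(_ isT) F.
  rewrite (eq_bigl (fun s => offw w (\bigcup_(Z <- enum zeta) Z) s)); last first.
    move=> s; symmetry; apply/forallP => i; rewrite bigcup_seq.
    rewrite (eq_bigl (fun Z => Z \in zeta)); last by move=> Z; rewrite mem_enum.
    by rewrite -/(cover zeta) Hcz inE.
  rewrite F.
  - by apply: eq_bigr => Z _; rewrite (sum_ext w Z (fun s => R Z s s)).
  - move=> Z Z'; rewrite !mem_enum => HZ HZ' ne; exact: (trivIsetP Tz).
  - by move=> Z s _; rewrite /R !glue_glue.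
set h := fun Z (a b : cfgX d Z) => R Z (ext w a) (ext w b) / tau Z.
exists h; split.
  move=> Z _; split.
    move=> v.
    have -> : \sum_a \sum_b (v a)^* * h Z a b * v b =
              (\sum_a \sum_b (v a)^* * rho (ext w a) (ext w b) * v b) / tau Z.
      rewrite big_distrl; apply: eq_bigr => a _; rewrite big_distrl; apply: eq_bigr => b _.
      by rewrite /h /R !glue_ext mulrA mulrAC.
    apply: mulr_ge0; last by rewrite invr_ge0 ltW.
    set u := fun s => if offw w Z s then v (resX Z s) else 0.
    have := proj1 Hd u.
    rewrite (@sum_off _ _ w Z); last first.
      by move=> s Hs; apply: big1 => t _; rewrite /u (negbTE Hs) conjC0 !mul0r.
    congr (_ <= _); apply: eq_bigr => a _.
    rewrite (@sum_off _ _ w Z); last by move=> t Ht; rewrite /u (negbTE Ht) mulr0.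
    by apply: eq_bigr => b _; rewrite /u !ext_off !res_ext.
  by rewrite /h -big_distrl /= -/(tau Z) divff.
move=> s t; rewrite Hk.
rewrite [RHS](eq_bigr (fun Z => R Z s t / tau Z)); last by move=> Z _; rewrite /h /R /= !glue_ext_res.
rewrite big_split /= prodfV mulrC; congr (_ * _).
by rewrite -[k](mulfK HP) Hkt mul1r.
Qed.

Theorem mainTheorem19 (n : nat) (d : 'I_n -> nat)
  (hn : (0 < n)%N) (hd : forall i, (1 < d i)%N)
  (Xi Xi' : {set {set {set 'I_n}}}) (hXi : is_PII Xi) (hXi' : is_PII Xi') :
  (forall rho : opL d, Xi_unc Xi rho \/ Xi_unc Xi' rho <-> Xi_unc (Xi :|: Xi') rho) /\
  (forall rho : opL d, Xi_unc Xi rho /\ Xi_unc Xi' rho <-> Xi_unc (Xi :&: Xi') rho).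
Proof.
split => rho; split.
- case=> [[xi H1 H2]|[xi H1 H2]]; exists xi => //; by rewrite inE H1 ?orbT.
- case=> xi; rewrite inE => /orP [H1|H1] H2; [left|right]; by exists xi.
- case=> [[xi H1 H2] [xi' H1' H2']].
  move: hXi hXi' => [P [_ Dc]] [P' [_ Dc']].
  have Hp := P _ H1; have Hp' := P' _ H1'.
  exists (meetP xi xi'); last exact: meet_unc.
  rewrite inE; apply/andP; split.
    by apply: (Dc _ xi) => //; [apply: meetP_partition | apply: meetP_refl].
  by apply: (Dc' _ xi') => //; [apply: meetP_partition | apply: meetP_refr].
- case=> xi; rewrite inE => /andP [H1 H1'] H2; split; by exists xi.
Qed.
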